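(* Let $(G,g)$ be a five-dimensional semi-Riemannian Lie group with a subgroup $K\cong\mathrm{SU}(2)$ generating a left-invariant conformal foliation $\mathcal F$ on $G$. Let $\mathfrak g=\mathfrak{su}(2)\oplus\mathfrak m$ be the orthogonal decomposition of the Lie algebra of $G$ and let $\{A,B,C,X,Y\}$ be an orthonormal basis for $\mathfrak g$ such that $A,B,C$ generate $\mathfrak{su}(2)$ with $[A,B]=2C$, $[C,A]=2B$, $[B,C]=2A$. In this setting the brackets have the form $[A,X]=-b_{11}B-c_{11}C$, $[A,Y]=-b_{21}B-c_{21}C$, $[B,X]=b_{11}A-c_{12}C$, $[B,Y]=b_{21}A-c_{22}C$, $[C,X]=c_{11}A+c_{12}B$, $[C,Y]=c_{21}A+c_{22}B$ for real numbers $b_{11},b_{21},c_{11},c_{12},c_{21},c_{22}$. Then the foliation $\mathcal F$ is semi-Riemannian and minimal. It is totally geodesic if and only if $$0=(\varepsilon_B-\varepsilon_A)b_{11}=(\varepsilon_B-\varepsilon_A)b_{21}=(\varepsilon_C-\varepsilon_A)c_{11}=(\varepsilon_C-\varepsilon_A)c_{21}=(\varepsilon_C-\varepsilon_B)c_{12}=(\varepsilon_C-\varepsilon_B)c_{22}.$$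
   Context: A semi-Riemannian Lie group $(G,g)$ is a Lie group with a left-invariant non-degenerate metric $g$ of arbitrary signature; its Lie algebra is identified with the left-invariant vector fields. The subgroup $K$ generates the left-invariant foliation $\mathcal F$ by left translates of $K$, with tangent distribution $\mathcal V$ spanned by $\mathfrak{su}(2)$ and orthogonal complement $\mathcal H$ spanned by $\mathfrak m$; $\mathcal V,\mathcal H$ also denote orthogonal projections. Orthonormal means $g(E_i,E_j)=\varepsilon_{E_i}\delta_{ij}$, $\varepsilon_{E_i}=g(E_i,E_i)\in\{\pm1\}$. With $\nabla$ the Levi-Civita connection: $B^{\mathcal H}(E,F)=\tfrac12\mathcal V(\nabla_EF+\nabla_FE)$ ($E,F\in\mathcal H$), $B^{\mathcal V}(E,F)=\tfrac12\mathcal H(\nabla_EF+\nabla_FE)$ ($E,F\in\mathcal V$). $\mathcal F$ is conformal if $B^{\mathcal H}=g\otimes V$ for some vector field $V$ in $\mathcal V$, semi-Riemannian if $B^{\mathcal H}=0$, minimal if $\sum_k\varepsilon_{V_k}B^{\mathcal V}(V_k,V_k)=0$ for an orthonormal basis $\{V_k\}$ of $\mathcal V$, and totally geodesic if $B^{\mathcal V}=0$. *)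

(* Defs.v *)
(* Everything is left-invariant, so the whole setting is
   encoded at the level of the Lie algebra g = Lie(G), identified with R^5
   via the orthonormal basis {A,B,C,X,Y} = {e 0, e 1, e 2, e 3, e 4}. *)
From HB Require Import structures.
From mathcomp Require Import all_boot all_order all_algebra.
Set Implicit Arguments. Unset Strict Implicit. Unset Printing Implicit Defensive.
Import Order.TTheory GRing.Theory Num.Theory.
Local Open Scope ring_scope.

Section Setting.
Variable R : realFieldType.

Definition vec := 'rV[R]_5.
Definition e (i : 'I_5) : vec := delta_mx 0 i.

Definition iA : 'I_5 := inord 0.
Definition iB : 'I_5 := inord 1.
Definition iC : 'I_5 := inord 2.
Definition iX : 'I_5 := inord 3.
Definition iY : 'I_5 := inord 4.

Definition gm (eps : 'I_5 -> R) (u v : vec) : R :=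
  \sum_(i < 5) eps i * u 0 i * v 0 i.

Definition bilin (c : 'I_5 -> 'I_5 -> vec) (u v : vec) : vec :=
  \sum_(i < 5) \sum_(j < 5) (u 0 i * v 0 j) *: c i j.

(* c i j = [e_i, e_j] *)
Definition is_lie_algebra (c : 'I_5 -> 'I_5 -> vec) : Prop :=
  (forall i j, c i j = - c j i) /\
  (forall i j k, bilin c (e i) (c j k) + bilin c (e j) (c k i)
                   + bilin c (e k) (c i j) = 0).

(* Levi-Civita connection on left-invariant fields: Gam i j = nabla_{e_i} e_j,
   torsion free and metric (g(e_i,e_j) is constant). *)
Definition is_levi_civita (eps : 'I_5 -> R) (c Gam : 'I_5 -> 'I_5 -> vec) : Prop :=
  (forall i j, Gam i j - Gam j i = c i j) /\
  (forall k i j, gm eps (Gam k i) (e j) + gm eps (e i) (Gam k j) = 0).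

Definition Vproj (u : vec) : vec := \row_(i < 5) (if (i < 3)%N then u 0 i else 0).
Definition Hproj (u : vec) : vec := \row_(i < 5) (if (i < 3)%N then 0 else u 0 i).
Definition vertical (u : vec) : Prop := Vproj u = u.
Definition horizontal (u : vec) : Prop := Hproj u = u.

Definition BH (Gam : 'I_5 -> 'I_5 -> vec) (u v : vec) : vec :=
  2^-1 *: Vproj (bilin Gam u v + bilin Gam v u).
Definition BV (Gam : 'I_5 -> 'I_5 -> vec) (u v : vec) : vec :=
  2^-1 *: Hproj (bilin Gam u v + bilin Gam v u).

Definition conformal_fol eps Gam : Prop :=
  exists W : vec, vertical W /\
    forall u v, horizontal u -> horizontal v -> BH Gam u v = gm eps u v *: W.
Definition semi_riemannian_fol (Gam : 'I_5 -> 'I_5 -> vec) : Prop :=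
  forall u v, horizontal u -> horizontal v -> BH Gam u v = 0.
(* {A,B,C} is an orthonormal basis of V *)
Definition minimal_fol (eps : 'I_5 -> R) Gam : Prop :=
  eps iA *: BV Gam (e iA) (e iA) + eps iB *: BV Gam (e iB) (e iB)
    + eps iC *: BV Gam (e iC) (e iC) = 0.
Definition totally_geodesic_fol (Gam : 'I_5 -> 'I_5 -> vec) : Prop :=
  forall u v, vertical u -> vertical v -> BV Gam u v = 0.

End Setting.
Arguments e {R} i.

(* Main.v *)
Require Import Defs.
From HB Require Import structures.
From mathcomp Require Import all_boot all_order all_algebra.
From mathcomp Require Import ring lra.
Import Order.TTheory GRing.Theory Num.Theory.
Local Open Scope ring_scope.

Notation o0 := (@Ordinal 5 0 isT).
Notation o1 := (@Ordinal 5 1 isT).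
Notation o2 := (@Ordinal 5 2 isT).
Notation o3 := (@Ordinal 5 3 isT).
Notation o4 := (@Ordinal 5 4 isT).

Lemma ord5P (P : 'I_5 -> Prop) : P o0 -> P o1 -> P o2 -> P o3 -> P o4 -> forall i, P i.
Proof.
move=> H0 H1 H2 H3 H4 [[|[|[|[|[|n]]]]] Hi] //.
- by have -> : Ordinal Hi = o0 by apply: val_inj.
- by have -> : Ordinal Hi = o1 by apply: val_inj.
- by have -> : Ordinal Hi = o2 by apply: val_inj.
- by have -> : Ordinal Hi = o3 by apply: val_inj.
- by have -> : Ordinal Hi = o4 by apply: val_inj.
Qed.

Lemma iAE : iA = o0. Proof. by apply: val_inj; rewrite /= inordK. Qed.
Lemma iBE : iB = o1. Proof. by apply: val_inj; rewrite /= inordK. Qed.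
Lemma iCE : iC = o2. Proof. by apply: val_inj; rewrite /= inordK. Qed.
Lemma iXE : iX = o3. Proof. by apply: val_inj; rewrite /= inordK. Qed.
Lemma iYE : iY = o4. Proof. by apply: val_inj; rewrite /= inordK. Qed.

Lemma e_coord (R : realFieldType) (i j : 'I_5) : (e i : vec R) 0 j = (j == i)%:R.
Proof. by rewrite /e mxE eqxx. Qed.

Lemma gm_e_r (R : realFieldType) eps (u : vec R) j : gm eps u (e j) = eps j * u 0 j.
Proof.
rewrite /gm (bigD1 j) //= big1 => [|i /negbTE ij]; last by rewrite e_coord ij mulr0.
by rewrite e_coord eqxx mulr1 addr0 mulrC.
Qed.

Lemma gm_e_l (R : realFieldType) eps (u : vec R) j : gm eps (e j) u = eps j * u 0 j.
Proof.
rewrite /gm (bigD1 j) //= big1 => [|i /negbTE ij]; last by rewrite e_coord ij mulr0 mul0r.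
by rewrite e_coord eqxx mulr1 addr0.
Qed.

Lemma bilin_e (R : realFieldType) (c : 'I_5 -> 'I_5 -> vec R) a b : bilin c (e a) (e b) = c a b.
Proof.
rewrite /bilin (bigD1 a) //= (bigD1 b) //= big1 => [|j /negbTE jb]; last first.
  by rewrite !e_coord jb eqxx mulr0 scale0r.
rewrite big1 => [|i /negbTE ia]; last first.
  by rewrite big1 // => j _; rewrite !e_coord ia mul0r scale0r.
by rewrite !e_coord !eqxx mulr1 scale1r !addr0.
Qed.

Lemma bilin_coord (R : realFieldType) (G : 'I_5 -> 'I_5 -> vec R) u v k :
  bilin G u v 0 k = \sum_i \sum_j u 0 i * v 0 j * G i j 0 k.
Proof.
rewrite /bilin summxE; apply: eq_bigr => i _.
rewrite summxE; apply: eq_bigr => j _; by rewrite mxE.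
Qed.

Lemma bilin_sym_coord (R : realFieldType) (G : 'I_5 -> 'I_5 -> vec R) u v k :
  (bilin G u v + bilin G v u) 0 k =
  \sum_i \sum_j u 0 i * v 0 j * (G i j 0 k + G j i 0 k).
Proof.
rewrite mxE !bilin_coord.
rewrite [X in _ + X = _]exchange_big -big_split /=; apply: eq_bigr => i _.
rewrite -big_split /=; apply: eq_bigr => j _; lra.
Qed.

Lemma koszul (R : realFieldType) eps (c Gam : 'I_5 -> 'I_5 -> vec R) :
  is_levi_civita eps c Gam -> forall i j k,
  eps k * (Gam i j 0 k + Gam j i 0 k) = - eps j * c i k 0 j - eps i * c j k 0 i.
Proof.
move=> [T M] i j k.
have Tc : forall i j k, Gam i j 0 k - Gam j i 0 k = c i j 0 k.
  by move=> a b d; rewrite -(T a b) !mxE.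
have Mc : forall d a b, eps b * Gam d a 0 b + eps a * Gam d b 0 a = 0.
  by move=> d a b; have := M d a b; rewrite gm_e_r gm_e_l.
have := Mc i j k; have := Mc j i k; have := Mc k i j.
have := Tc i k j; have := Tc j k i.
move=> h1 h2 h3 h4 h5.
have e1 : eps j * Gam i k 0 j = eps j * Gam k i 0 j + eps j * c i k 0 j.
  by rewrite -h2; ring.
have e2 : eps i * Gam j k 0 i = eps i * Gam k j 0 i + eps i * c j k 0 i.
  by rewrite -h1; ring.
lra.
Qed.
Theorem theorem4p2 (R : realFieldType) (eps : 'I_5 -> R)
  (c Gam : 'I_5 -> 'I_5 -> vec R)
  (b11 b21 c11 c12 c21 c22 : R) :
  (forall i, eps i = 1 \/ eps i = -1) ->
  is_lie_algebra c ->
  is_levi_civita eps c Gam ->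
  c iA iB = 2 *: e iC -> c iC iA = 2 *: e iB -> c iB iC = 2 *: e iA ->
  c iA iX = - (b11 *: e iB) - c11 *: e iC ->
  c iA iY = - (b21 *: e iB) - c21 *: e iC ->
  c iB iX = b11 *: e iA - c12 *: e iC ->
  c iB iY = b21 *: e iA - c22 *: e iC ->
  c iC iX = c11 *: e iA + c12 *: e iB ->
  c iC iY = c21 *: e iA + c22 *: e iB ->
  conformal_fol eps Gam ->
  semi_riemannian_fol Gam /\ minimal_fol eps Gam /\
  (totally_geodesic_fol Gam <->
     ((eps iB - eps iA) * b11 = 0 /\ (eps iB - eps iA) * b21 = 0 /\
      (eps iC - eps iA) * c11 = 0 /\ (eps iC - eps iA) * c21 = 0 /\
      (eps iC - eps iB) * c12 = 0 /\ (eps iC - eps iB) * c22 = 0)).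
Proof.
move=> heps [anti _] LC _ _ _ hAX hAY hBX hBY hCX hCY _.
rewrite /minimal_fol iAE iBE iCE.
rewrite iAE iBE iCE iXE in hAX hBX hCX.
rewrite iAE iBE iCE iYE in hAY hBY hCY.
have KS := @koszul R _ _ _ LC.
have epsnz : forall k, eps k != 0.
  by move=> k; case: (heps k) => ->; rewrite ?oppr_eq0 oner_eq0.
have BVcoord : forall u v k, BV Gam u v 0 k =
    if (k < 3)%N then 0 else 2^-1 * (bilin Gam u v + bilin Gam v u) 0 k.
  by move=> u v k; rewrite /BV !mxE; case: ifP; rewrite ?mulr0.
split.
  move=> u v hu hv; apply/rowP => k.
  have hu' : forall i : 'I_5, (i < 3)%N -> u 0 i = 0 by move=> i hi; rewrite -hu mxE hi.
  have hv' : forall i : 'I_5, (i < 3)%N -> v 0 i = 0 by move=> i hi; rewrite -hv mxE hi.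
  rewrite /BH [RHS]mxE mxE [Vproj _ 0 k]mxE; case: ifP => hk; last by rewrite mulr0.
  rewrite bilin_sym_coord big1 ?mulr0 // => i _; rewrite big1 // => j _.
  case: (ltnP i 3) => hi; first by rewrite hu' ?mul0r.
  case: (ltnP j 3) => hj; first by rewrite hv' ?mulr0 ?mul0r.
  suff -> : Gam i j 0 k + Gam j i 0 k = 0 by rewrite mulr0.
  apply: (mulfI (epsnz k)); rewrite mulr0 KS (anti i k) (anti j k).
  move: hi hj hk; elim/ord5P: i => //; elim/ord5P: j => //; elim/ord5P: k => // _ _ _;
  rewrite ?hAX ?hAY ?hBX ?hBY ?hCX ?hCY !mxE /=; lra.
have vert : forall a : 'I_5, (a < 3)%N -> vertical (e a : vec R).
  move=> a ha; apply/rowP => j; rewrite !mxE; case: ifP => // hj.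
  by have -> : (j == a) = false by apply/negP => /eqP ja; move: hj; rewrite ja ha.
have BVe : forall a b k : 'I_5, (a < 3)%N -> (b < 3)%N -> (3 <= k)%N ->
    eps k * (2 * BV Gam (e a) (e b) 0 k) = - eps b * c a k 0 b - eps a * c b k 0 a.
  move=> a b k _ _ hk; rewrite BVcoord ltnNge hk /= !bilin_e -KS. 
  by rewrite mxE; congr (_ * _); rewrite mulrA divff ?mul1r // pnatr_eq0.
split.
  have Z : forall a : 'I_5, (a < 3)%N -> BV Gam (e a) (e a) = 0.
    move=> a ha; apply/rowP => k; rewrite [RHS]mxE.
    case: (ltnP k 3) => hk; first by rewrite BVcoord hk.
    have h := BVe a a k ha ha hk.
    suff : eps k * (2 * BV Gam (e a) (e a) 0 k) = 0.
      by move/eqP; rewrite !mulf_eq0 (negbTE (epsnz k)) pnatr_eq0 /= => /eqP.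
    rewrite h; clear h; move: ha hk; elim/ord5P: a => //; elim/ord5P: k => // _ _;
    rewrite ?hAX ?hAY ?hBX ?hBY ?hCX ?hCY !mxE /=; lra.
  by rewrite !Z // !scaler0 !addr0.
split.
  move=> tg.
  have T : forall a b k : 'I_5, (a < 3)%N -> (b < 3)%N -> (3 <= k)%N ->
      - eps b * c a k 0 b - eps a * c b k 0 a = 0.
    move=> a b k ha hb hk; by rewrite -BVe // (tg _ _ (vert a ha) (vert b hb)) mxE !mulr0.
  have := T o0 o1 o3 isT isT isT; have := T o0 o1 o4 isT isT isT;
  have := T o0 o2 o3 isT isT isT; have := T o0 o2 o4 isT isT isT;
  have := T o1 o2 o3 isT isT isT; have := T o1 o2 o4 isT isT isT.
  rewrite ?hAX ?hAY ?hBX ?hBY ?hCX ?hCY !mxE /=.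
  move=> *; split; [lra|split; [lra|split; [lra|split; lra]]].
move=> [h1 [h2 [h3 [h4 [h5 h6]]]]] u v hu hv; apply/rowP => k.
have hu' : forall i : 'I_5, ~~ (i < 3)%N -> u 0 i = 0.
  by move=> i hi; rewrite -hu mxE (negbTE hi).
have hv' : forall i : 'I_5, ~~ (i < 3)%N -> v 0 i = 0.
  by move=> i hi; rewrite -hv mxE (negbTE hi).
rewrite BVcoord [RHS]mxE; case: ifP => hk //.
rewrite bilin_sym_coord big1 ?mulr0 // => i _; rewrite big1 // => j _.
case: (boolP (i < 3)%N) => hi; last by rewrite hu' ?mul0r.
case: (boolP (j < 3)%N) => hj; last by rewrite hv' ?mulr0 ?mul0r.
suff -> : Gam i j 0 k + Gam j i 0 k = 0 by rewrite mulr0.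
apply: (mulfI (epsnz k)); rewrite mulr0 KS.
move: hi hj hk; elim/ord5P: i => //; elim/ord5P: j => //; elim/ord5P: k => // _ _ _;
rewrite ?hAX ?hAY ?hBX ?hBY ?hCX ?hCY ?(anti o1 o0) ?(anti o2 o0) ?(anti o2 o1) ?hAX ?hAY ?hBX ?hBY ?hCX ?hCY !mxE /=; lra.
Qed.
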